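(* Let $T>0$. For each $p\ge1$ and $q\ge1$ there exists a constant $C_{p,q,T}>0$ (independent of $N$ and $s$) such that $$\mathbb E\bigl[(\widetilde Z^N(s))^p\bigr]\le C_{p,q,T}\,N^{-q/2}\qquad\text{for all } s\in[0,T],\ N\in\mathbb N.$$
   Context: Model. Fix $\tau>0$, $\mu\ge 0$, $N\in\mathbb N$, and write $L=\lfloor \tau N\rfloor$. The state space is $\Omega_N=[0,\infty)^{L+1}$, with elements $x=(x_{-L},\dots,x_0)$. Define $\theta_N^\pm:\Omega_N\to\Omega_N$ by $(\theta_N^\pm x)_j=x_{j+1}$ for $-L\le j<0$, $(\theta_N^+x)_0=x_0(1+\frac1N)$, $(\theta_N^-x)_0=\max\{x_0(1-\frac{x_{-L}}{N^2}),0\}$. Let $\xi^N=(\xi^N(n))_{n\ge0}$ be the discrete-time Markov chain on $\Omega_N$ moving from $x$ to $\theta_N^+x$ or $\theta_N^-x$ with probability $1/2$ each, with $\xi^N_j(0)=\mu N$ for all $j$. Let $(\sigma_n)_{n\ge1}$ be i.i.d. Exp(1), independent of $\xi^N$, $J_0=0$, $J_n=\sigma_1+\dots+\sigma_n$, and $X^N(t)=\xi^N(n)$ for $t\in[J_n,J_{n+1})$. Define $Z^N(t)=X^N_{-L}(Nt)/N$ for $t\ge0$ and $\widetilde Z^N(t)=Z^N(t)-\min\{Z^N(t),N\}$. *)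

(* Defs.v *)
From Stdlib Require Import Reals Lra Lia List ZArith.
From Coquelicot Require Import Coquelicot.
Open Scope R_scope.

(* State x = (x_{-L},...,x_0) is encoded as a function k : nat -> R with
   x k = x_{k-L} for 0 <= k <= L (so x 0 = x_{-L}, x L = x_0);
   coordinates k > L are unused (kept at their initial value). *)
Definition state := nat -> R.

Definition Lof (tau : R) (N : nat) : nat := Z.to_nat (Int_part (tau * INR N)).

Definition theta_plus (L N : nat) (x : state) : state :=
  fun k => if (k <? L)%nat then x (S k)
           else if (k =? L)%nat then x L * (1 + / INR N)
           else x k.

Definition theta_minus (L N : nat) (x : state) : state :=
  fun k => if (k <? L)%nat then x (S k)
           else if (k =? L)%nat then Rmax (x L * (1 - x O / (INR N ^ 2))) 0
           else x k.

Definition xi0 (mu : R) (N : nat) : state := fun _ => mu * INR N.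

(* the embedded chain after the sequence of coin flips bs
   (true = move by theta^+, false = move by theta^-) *)
Definition xi_path (L N : nat) (mu : R) (bs : list bool) : state :=
  fold_left (fun x (b : bool) => if b then theta_plus L N x else theta_minus L N x)
            bs (xi0 mu N).

Fixpoint all_bits (n : nat) : list (list bool) :=
  match n with
  | O => nil :: nil
  | S m => map (cons true) (all_bits m) ++ map (cons false) (all_bits m)
  end.

Definition E_xi (L N : nat) (mu : R) (n : nat) (f : state -> R) : R :=
  fold_right Rplus 0 (map (fun bs => f (xi_path L N mu bs)) (all_bits n)) / 2 ^ n.

Definition poisson_w (t : R) (n : nat) : R := exp (- t) * t ^ n / INR (fact n).

(* E[f(X^N(t))] for f >= 0, as an extended real (value in [0, +oo]):
   X^N(t) = xi^N(K_t), K_t ~ Poisson(t) independent of xi^N. *)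
Definition E_X (L N : nat) (mu t : R) (f : state -> R) : Rbar :=
  Lim_seq (fun M => sum_f_R0 (fun n => poisson_w t n * E_xi L N mu n f) M).

(* real power x^p for x >= 0, with 0^p = 0 (p >= 1) *)
Definition rpow (x p : R) : R := if Rlt_dec 0 x then Rpower x p else 0.

Definition Ztilde_of (N : nat) (z : R) : R := z - Rmin z (INR N).

(* E[(tilde Z^N(s))^p], where Z^N(s) = X^N_{-L}(N s) / N *)
Definition E_Ztilde_pow (tau mu : R) (N : nat) (s p : R) : Rbar :=
  E_X (Lof tau N) N mu (INR N * s)
      (fun x => rpow (Ztilde_of N (x O / INR N)) p).

(* Main.v *)
Require Import Defs.
From Stdlib Require Import Reals Lra Lia List.
From Coquelicot Require Import Coquelicot.
Open Scope R_scope.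

Lemma step_bound (L N : nat) (x : state) (c : R) (b : bool) :
  1 <= INR N -> 0 <= c -> (forall k, 0 <= x k <= c) ->
  forall k, 0 <= (if b then theta_plus L N x else theta_minus L N x) k <= c * (1 + / INR N).
Proof.
  intros HN Hc Hx k.
  assert (Hi : 0 < / INR N) by (apply Rinv_0_lt_compat; lra).
  assert (Hc1 : c <= c * (1 + / INR N)) by nra.
  destruct b; unfold theta_plus, theta_minus;
  destruct (k <? L)%nat; try (specialize (Hx (S k)); lra);
  destruct (k =? L)%nat; try (specialize (Hx k); lra).
  - specialize (Hx L). split; nra.
  - pose proof (Hx L). pose proof (Hx O).
    assert (0 <= x O / (INR N ^ 2)).
    { apply Rmult_le_pos; [lra|]. apply Rlt_le, Rinv_0_lt_compat. simpl; nra. }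
    split; [apply Rmax_r|]. apply Rmax_lub; nra.
Qed.

Lemma fold_bound (L N : nat) (bs : list bool) : 1 <= INR N ->
  forall (x : state) (c : R), 0 <= c -> (forall k, 0 <= x k <= c) ->
  forall k, 0 <= fold_left (fun x (b : bool) => if b then theta_plus L N x else theta_minus L N x) bs x k
             <= c * (1 + / INR N) ^ length bs.
Proof.
  intros HN. induction bs as [|b bs IH]; intros x c Hc Hx k.
  - simpl. rewrite Rmult_1_r. apply Hx.
  - simpl. assert (Hi : 0 < / INR N) by (apply Rinv_0_lt_compat; lra).
    replace (c * ((1 + / INR N) * (1 + / INR N) ^ length bs)) with
      ((c * (1 + / INR N)) * (1 + / INR N) ^ length bs) by ring.
    apply IH; [nra|]. apply step_bound; auto.
Qed.

Lemma all_bits_len n : forall bs, In bs (all_bits n) -> length bs = n.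
Proof.
  induction n; simpl; intros bs H.
  - destruct H as [<-|[]]; reflexivity.
  - apply in_app_or in H; destruct H as [H|H]; apply in_map_iff in H;
    destruct H as [b' [<- Hb]]; simpl; f_equal; auto.
Qed.

Lemma all_bits_count n : length (all_bits n) = (2 ^ n)%nat.
Proof.
  induction n; simpl; auto. rewrite length_app, !length_map, IHn. lia.
Qed.

Lemma sum_list_bound (A : Type) (g : A -> R) (B : R) (l : list A) :
  (forall a, In a l -> g a <= B) ->
  fold_right Rplus 0 (map g l) <= INR (length l) * B.
Proof.
  induction l as [|a l IH]; intros H; cbn [map fold_right length].
  - simpl; lra.
  - rewrite S_INR. assert (g a <= B) by (apply H; left; auto).
    assert (fold_right Rplus 0 (map g l) <= INR (length l) * B) by (apply IH; intros; apply H; right; auto). lra.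
Qed.

Lemma E_xi_bound L N mu n f B :
  (forall bs, length bs = n -> f (xi_path L N mu bs) <= B) ->
  E_xi L N mu n f <= B.
Proof.
  intros H. unfold E_xi.
  assert (Hp : 0 < 2 ^ n) by (apply pow_lt; lra).
  apply (Rmult_le_reg_r (2 ^ n)); auto. unfold Rdiv.
  rewrite Rmult_assoc, Rinv_l by lra. rewrite Rmult_1_r.
  eapply Rle_trans. apply sum_list_bound. intros bs Hb. apply H. now apply all_bits_len.
  rewrite all_bits_count, pow_INR. simpl INR. replace (1+1) with 2 by ring. lra.
Qed.

Lemma exp_le' x y : x <= y -> exp x <= exp y.
Proof. intros [H|H]; [apply Rlt_le, exp_increasing; auto | subst; lra]. Qed.

Lemma exp_pow' x n : exp x ^ n = exp (INR n * x).
Proof.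
  induction n; simpl. rewrite Rmult_0_l, exp_0; auto.
  rewrite IHn, <- exp_plus. f_equal. destruct n; simpl; ring.
Qed.

Lemma Rpower_pos' x y : 0 < Rpower x y.
Proof. unfold Rpower; apply exp_pos. Qed.

Lemma pointwise (N : nat) (Z Y p r : R) : 1 <= INR N -> 0 <= Z <= Y -> 0 < Y ->
  1 <= p -> 0 < r ->
  rpow (Ztilde_of N Z) p <= Rpower (INR N) (- r) * Rpower Y (p + r).
Proof.
  intros HN HZ HY Hp Hr.
  assert (Hpos : 0 < Rpower (INR N) (- r) * Rpower Y (p + r))
    by (apply Rmult_lt_0_compat; apply Rpower_pos').
  unfold rpow. destruct (Rlt_dec 0 (Ztilde_of N Z)) as [H|H]; [|lra].
  unfold Ztilde_of in *.
  destruct (Rle_dec Z (INR N)) as [H1|H1].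
  { rewrite Rmin_left in H by auto. lra. }
  rewrite Rmin_right in * by lra.
  apply Rle_trans with (Rpower Z p).
  { apply Rle_Rpower_l; lra. }
  replace p with ((p + r) + - r) at 1 by ring.
  rewrite Rpower_plus, Rmult_comm.
  apply Rmult_le_compat.
  - apply Rlt_le, Rpower_pos'.
  - apply Rlt_le, Rpower_pos'.
  - rewrite !Rpower_Ropp. apply Rinv_le_contravar. apply Rpower_pos'.
    apply Rle_Rpower_l; lra.
  - apply Rle_Rpower_l; lra.
Qed.

Lemma poisson_sum (t b K : R) (M : nat) : 0 <= t -> 0 <= K ->
  sum_f_R0 (fun n => poisson_w t n * (K * exp (b * INR n))) M
  <= K * exp (t * (exp b - 1)).
Proof.
  intros Ht HK.
  rewrite (sum_eq _ (fun n => ((t * exp b) ^ n / INR (Factorial.fact n)) * (K * exp (- t)))).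
  2:{ intros i _. unfold poisson_w. rewrite Rpow_mult_distr, exp_pow'.
      replace (INR i * b) with (b * INR i) by ring. field. apply INR_fact_neq_0. }
  rewrite <- scal_sum.
  replace (K * exp (t * (exp b - 1))) with (K * exp (- t) * exp (t * exp b)).
  2:{ rewrite Rmult_assoc, <- exp_plus. f_equal. f_equal. ring. }
  apply Rmult_le_compat_l.
  - apply Rmult_le_pos; auto. apply Rlt_le, exp_pos.
  - apply exp_ge_taylor. apply Rmult_le_pos; auto. apply Rlt_le, exp_pos.
Qed.

Lemma expm1_le b : 0 <= b -> exp b - 1 <= b * exp b.
Proof.
  intros Hb. pose proof (exp_ineq1_le (- b)). rewrite exp_Ropp in H.
  pose proof (exp_pos b).
  assert ((1 - b) * exp b <= / exp b * exp b) by (apply Rmult_le_compat_r; lra).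
  rewrite Rinv_l in H1 by lra. nra.
Qed.

Theorem lemma3p3 (tau mu T : R) (htau : 0 < tau) (hmu : 0 <= mu) (hT : 0 < T)
  (p q : R) (hp : 1 <= p) (hq : 1 <= q) :
  exists C : R, 0 < C /\
    forall (N : nat) (s : R), (1 <= N)%nat -> 0 <= s <= T ->
      Rbar_le (E_Ztilde_pow tau mu N s p) (Finite (C * Rpower (INR N) (- q / 2))).
Proof.
  set (r := q / 2). set (a := p + r).
  assert (Hr : 0 < r) by (unfold r; lra).
  assert (Ha : 0 < a) by (unfold a; lra).
  exists (Rpower (mu + 1) a * exp (T * (a * exp a))).
  split. { apply Rmult_lt_0_compat; [apply Rpower_pos' | apply exp_pos]. }
  intros N s HN Hs.
  assert (HN' : 1 <= INR N) by (apply le_INR in HN; simpl in HN; lra).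
  set (K := Rpower (INR N) (- r) * Rpower (mu + 1) a).
  set (b := a / INR N).
  set (t := INR N * s).
  assert (HK : 0 <= K) by (unfold K; apply Rmult_le_pos; apply Rlt_le, Rpower_pos').
  assert (Ht : 0 <= t) by (unfold t; nra).
  assert (Hb : 0 <= b) by (unfold b; apply Rmult_le_pos; [lra| apply Rlt_le, Rinv_0_lt_compat; lra]).
  unfold E_Ztilde_pow, E_X.
  rewrite <- Lim_seq_const.
  apply Lim_seq_le_loc. exists O. intros M _.
  fold t.
  apply Rle_trans with (sum_f_R0 (fun n => poisson_w t n * (K * exp (b * INR n))) M).
  { apply sum_Rle. intros n _.
    apply Rmult_le_compat_l.
    { unfold poisson_w. apply Rmult_le_pos. apply Rmult_le_pos.
      apply Rlt_le, exp_pos. apply pow_le; auto.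
      apply Rlt_le, Rinv_0_lt_compat, INR_fact_lt_0. }
    apply E_xi_bound. intros bs Hlen.
    set (x := xi_path (Lof tau N) N mu bs).
    assert (Hx : 0 <= x O <= (mu + 1) * INR N * (1 + / INR N) ^ n).
    { rewrite <- Hlen. unfold x, xi_path. apply fold_bound; auto.
      - apply Rmult_le_pos; lra.
      - intros k. unfold xi0. split; nra. }
    assert (Hpw : (1 + / INR N) ^ n <= exp (INR n / INR N)).
    { replace (INR n / INR N) with (INR n * / INR N) by (unfold Rdiv; auto).
      rewrite <- exp_pow'. apply pow_incr. split.
      - assert (0 < / INR N) by (apply Rinv_0_lt_compat; lra). lra.
      - apply exp_ineq1_le. }
    assert (Hpw0 : 0 <= (1 + / INR N) ^ n).
    { apply pow_le. assert (0 < / INR N) by (apply Rinv_0_lt_compat; lra). lra. }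
    set (Y := (mu + 1) * exp (INR n / INR N)).
    assert (HY : 0 < Y) by (unfold Y; apply Rmult_lt_0_compat; [lra | apply exp_pos]).
    assert (HZ : 0 <= x O / INR N <= Y).
    { split. apply Rmult_le_pos; [lra | apply Rlt_le, Rinv_0_lt_compat; lra].
      apply (Rmult_le_reg_r (INR N)); [lra|].
      unfold Rdiv. rewrite Rmult_assoc, Rinv_l, Rmult_1_r by lra.
      unfold Y. assert ((mu + 1) * INR N * (1 + / INR N) ^ n <= (mu + 1) * INR N * exp (INR n / INR N)) by (apply Rmult_le_compat_l; [nra|auto]). nra. }
    eapply Rle_trans. apply (pointwise N _ Y p r); auto.
    unfold K, a. rewrite Rmult_assoc. apply Rmult_le_compat_l.
    { apply Rlt_le, Rpower_pos'. }
    unfold Y. rewrite <- Rpower_mult_distr by (try lra; apply exp_pos).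
    apply Rmult_le_compat_l. { apply Rlt_le, Rpower_pos'. }
    unfold Rpower at 1. rewrite ln_exp. apply exp_le'. unfold b, a. right. field. lra. }
  eapply Rle_trans. apply poisson_sum; auto.
  replace (- q / 2) with (- r) by (unfold r; field).
  unfold K. rewrite Rmult_assoc.
  replace (Rpower (mu + 1) a * exp (T * (a * exp a)) * Rpower (INR N) (- r))
    with (Rpower (INR N) (- r) * (Rpower (mu + 1) a * exp (T * (a * exp a)))) by ring.
  apply Rmult_le_compat_l. { apply Rlt_le, Rpower_pos'. }
  apply Rmult_le_compat_l. { apply Rlt_le, Rpower_pos'. }
  apply exp_le'.
  assert (Hbe : exp b - 1 <= b * exp b) by (apply expm1_le; auto).
  assert (Hba : b <= a).
  { unfold b. apply (Rmult_le_reg_r (INR N)); [lra|]. unfold Rdiv.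
    rewrite Rmult_assoc, Rinv_l by lra. nra. }
  assert (Heb : exp b <= exp a) by (apply exp_le'; auto).
  assert (Htb : t * b = s * a) by (unfold t, b; field; lra).
  assert (0 <= exp b - 1) by (pose proof (exp_ineq1_le b); lra).
  apply Rle_trans with (t * (b * exp b)).
  { apply Rmult_le_compat_l; auto. }
  rewrite <- Rmult_assoc, Htb.
  pose proof (exp_pos b). pose proof (exp_pos a).
  assert (s * a <= T * a) by nra.
  assert (s * a * exp b <= s * a * exp a) by (apply Rmult_le_compat_l; nra).
  assert (s * a * exp a <= T * a * exp a) by (apply Rmult_le_compat_r; lra).
  lra.
Qed.
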